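(* Assume $d_{min}\ge d_{close}+d_{open}$ (i.e. $W\ge d_{open}$). Let $R$ be a regular run. If Dir is set to open at some moment $\alpha$, then Dir = open over the interval $(\alpha,\alpha+d_{open})$.
   Context: Setting (evolving algebra for the railroad crossing). States are structures over a vocabulary containing: a finite universe Tracks; the reals and ExtendedReals $=\mathbb{R}\cup\{\infty\}$ with standard $<$ and $+$ ($\infty$ largest); a nullary real-valued symbol $\mathrm{CT}$ (current time); positive real constants $d_{close},d_{open},d_{min},d_{max}$ with $d_{close}<d_{min}\le d_{max}$; a unary function TrackStatus from Tracks to $\{\text{empty},\text{coming},\text{incrossing}\}$; a unary function Deadline from Tracks to ExtendedReals; a nullary Dir with values in $\{\text{open},\text{close}\}$; a nullary GateStatus with values in $\{\text{opened},\text{closed}\}$. Put $W=d_{min}-d_{close}$ and $\Delta_{close}=d_{close}+(d_{max}-d_{min})=d_{max}-W$. For a track $x$, $s(x)$ is the condition [$\mathrm{TrackStatus}(x)=\text{empty}$ or $\mathrm{CT}+d_{open}<\mathrm{Deadline}(x)$], and SafeToOpen is $\forall x\in\mathrm{Tracks}\ s(x)$. The program has two modules (agents). Gate: simultaneously OpenGate ''if Dir=open then GateStatus:=opened'' and CloseGate ''if Dir=close then GateStatus:=closed''. Controller: simultaneously, for every track $x$, SetDeadline$(x)$ ''if TrackStatus$(x)$=coming and Deadline$(x)=\infty$ then Deadline$(x):=\mathrm{CT}+W$'', SignalClose$(x)$ ''if $\mathrm{CT}=$Deadline$(x)$ then Dir:=close'', ClearDeadline$(x)$ ''if TrackStatus$(x)$=empty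 and Deadline$(x)<\infty$ then Deadline$(x):=\infty$'', together with SignalOpen ''if Dir=close and SafeToOpen then Dir:=open''. Executing a module means computing all updates it generates in the current state and performing them simultaneously (nothing happens if the update set is inconsistent). A module is enabled at a state if its update set is consistent and contains an update that changes the state. TrackStatus is external (changed only by the environment); Deadline, Dir, GateStatus are internal (changed only by the modules); other symbols are static. Runs: for $t\mapsto R(t)$, $t\in[0,\infty)$, let $\rho(t)$ be the reduct of $R(t)$ without CT. $R$ is a pre-run if all $R(t)$ share a superuniverse, $\mathrm{CT}=t$ in $R(t)$, and for every $\tau>0$ there are $0=t_0<\dots<t_n=\tau$ with $\rho$ constant on each $(t_i,t_{i+1})$. For a term $e$ (free variables fixed), $e_t$ is its value in $R(t)$, $e_{t+}$ (resp. $e_{t-}$, $t>0$) its constant value on some $(t,t+\epsilon)$ (resp. $(t-\epsilon,t)$); likewise $\rho(t\pm)$. $e$ holds over an interval if it holds at each point; $e$ becomes (is set to) $a$ at $t$ if $e_{t-}\ne a=e_t$ or $e_t\neq a=e_{t+}$. A pre-run is a run if (i) whenever $\rho(t+)\neq\rho(t)$, $\rho(t+)$ is the CT-free reduct of the result of executing some modules at $R(t)$ (these agents fire at $t$), with external functions equal in $\rho(t)$ and $\rho(t+)$; (ii) whenever $t>0$ and $\rho(t)\ne\rho(t-)$, they differ only in external functions. An agent is immediate if it fires at every moment it is enabled; bounded if immediate or there is $b>0$ with no interval $(t,t+b)$ over which it is enabled but never fires. Initial states: TrackStatus$(x)$=empty and Deadline$(x)=\infty$ for every track $x$. A regular run is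 a run $R$ with $R(0)$ initial such that: (Train Motion) for each track $x$ there is a finite or infinite sequence $0=t_0<t_1<t_2<\cdots$ (the significant moments of $x$) with TrackStatus$(x)$=empty over each $[t_{3i},t_{3i+1})$, =coming over each $[t_{3i+1},t_{3i+2})$ where $d_{min}\le t_{3i+2}-t_{3i+1}\le d_{max}$, =incrossing over each $[t_{3i+2},t_{3i+3})$, and, if the sequence is finite with last element $t_k$, then $3\mid k$ and TrackStatus$(x)$=empty over $[t_k,\infty)$; (Controller Timing) Controller is immediate; (Gate Timing) Gate is bounded, there is no interval $(t,t+d_{close})$ over which Dir=close and GateStatus=opened both hold, and no interval $(t,t+d_{open})$ over which Dir=open and GateStatus=closed both hold. *)

(* Defs.v *)
From Stdlib Require Import Reals Lra List.
Open Scope R_scope.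
Set Implicit Arguments.

Record params := Params { d_close : R; d_open : R; d_min : R; d_max : R }.

Definition valid_params (p : params) : Prop :=
  0 < d_close p /\ 0 < d_open p /\ 0 < d_min p /\ 0 < d_max p /\
  d_close p < d_min p /\ d_min p <= d_max p.

Definition W (p : params) : R := d_min p - d_close p.

(** Extended reals R ∪ {∞}: [None] stands for ∞. *)
Definition ExtR := option R.
Definition ext_lt (a b : ExtR) : Prop :=
  match a, b with
  | Some x, Some y => x < y
  | Some _, None => True
  | None, _ => False
  end.

Inductive tstatus := empty | coming | incrossing.
Inductive dir := open | close.
Inductive gstatus := opened | closed.

Definition FiniteType (T : Type) : Prop := exists l : list T, forall x : T, In x l.

(** CT-free part of a state (the static symbols are fixed by [params]). *)
Record State (Tr : Type) := MkState {
  TrackStatus : Tr -> tstatus;   (* external *)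
  Deadline : Tr -> ExtR;
  Dir : dir;
  GateStatus : gstatus
}.
Arguments MkState {Tr}.

Inductive loc (Tr : Type) := LDeadline (x : Tr) | LDir | LGateStatus.
Arguments LDir {Tr}.
Arguments LGateStatus {Tr}.
Inductive value := VExt (e : ExtR) | VDir (d : dir) | VGate (g : gstatus).

Definition update (Tr : Type) := (loc Tr * value)%type.
Definition updset (Tr : Type) := update Tr -> Prop.

Definition val_at {Tr} (s : State Tr) (l : loc Tr) : value :=
  match l with
  | LDeadline x => VExt (Deadline s x)
  | LDir => VDir (Dir s)
  | LGateStatus => VGate (GateStatus s)
  end.

Definition consistent {Tr} (U : updset Tr) : Prop :=
  forall l v1 v2, U (l, v1) -> U (l, v2) -> v1 = v2.

Definition s_track {Tr} (p : params) (ct : R) (s : State Tr) (x : Tr) : Prop :=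
  TrackStatus s x = empty \/ ext_lt (Some (ct + d_open p)) (Deadline s x).
Definition SafeToOpen {Tr} (p : params) (ct : R) (s : State Tr) : Prop :=
  forall x : Tr, s_track p ct s x.

Inductive agent := Gate | Controller.

Definition gate_updates {Tr} (s : State Tr) : updset Tr := fun u =>
  (Dir s = open /\ u = (LGateStatus, VGate opened)) \/
  (Dir s = close /\ u = (LGateStatus, VGate closed)).

Definition ctrl_updates {Tr} (p : params) (ct : R) (s : State Tr) : updset Tr := fun u =>
  (exists x, TrackStatus s x = coming /\ Deadline s x = None /\
             u = (LDeadline x, VExt (Some (ct + W p)))) \/
  (exists x, Deadline s x = Some ct /\ u = (LDir, VDir close)) \/
  (exists x, TrackStatus s x = empty /\ Deadline s x <> None /\
             u = (LDeadline x, VExt None)) \/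
  (Dir s = close /\ SafeToOpen p ct s /\ u = (LDir, VDir open)).

Definition updates {Tr} (p : params) (A : agent) (ct : R) (s : State Tr) : updset Tr :=
  match A with
  | Gate => gate_updates s
  | Controller => ctrl_updates p ct s
  end.

Definition enabled {Tr} (p : params) (A : agent) (ct : R) (s : State Tr) : Prop :=
  consistent (updates p A ct s) /\
  exists l v, updates p A ct s (l, v) /\ val_at s l <> v.

(** Each module's update set is performed if consistent (otherwise that module does
    nothing); the modules update disjoint locations; external functions unchanged. *)
Definition exec {Tr} (p : params) (M : agent -> Prop) (ct : R) (s s' : State Tr) : Prop :=
  let E : updset Tr := fun u =>
    exists A, M A /\ consistent (updates p A ct s) /\ updates p A ct s u in
  TrackStatus s' = TrackStatus s /\
  forall l : loc Tr,
    (exists v, E (l, v) /\ val_at s' l = v) \/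
    ((forall v, ~ E (l, v)) /\ val_at s' l = val_at s l).

(** Runs: [Rn t] is the CT-free reduct ρ(t) of R(t) (CT = t implicitly). *)
Definition right_lim {Tr} (Rn : R -> State Tr) (t : R) (s : State Tr) : Prop :=
  exists eps, 0 < eps /\ forall u, t < u < t + eps -> Rn u = s.
Definition left_lim {Tr} (Rn : R -> State Tr) (t : R) (s : State Tr) : Prop :=
  exists eps, 0 < eps /\ forall u, t - eps < u < t -> Rn u = s.

Definition pre_run {Tr} (Rn : R -> State Tr) : Prop :=
  forall tau, 0 < tau ->
    exists (ts : nat -> R) (n : nat),
      ts 0%nat = 0 /\ ts n = tau /\
      (forall i, (i < n)%nat -> ts i < ts (S i)) /\
      (forall i, (i < n)%nat -> forall u v,
          ts i < u < ts (S i) -> ts i < v < ts (S i) -> Rn u = Rn v).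

Definition is_run {Tr} (p : params) (Rn : R -> State Tr) : Prop :=
  pre_run Rn /\
  (forall t s', 0 <= t -> right_lim Rn t s' -> s' <> Rn t ->
     exists M, exec p M t (Rn t) s') /\
  (forall t s', 0 < t -> left_lim Rn t s' -> s' <> Rn t ->
     Deadline s' = Deadline (Rn t) /\ Dir s' = Dir (Rn t) /\
     GateStatus s' = GateStatus (Rn t)).

Definition fires {Tr} (p : params) (Rn : R -> State Tr) (A : agent) (t : R) : Prop :=
  exists s', right_lim Rn t s' /\ s' <> Rn t /\
    exists M : agent -> Prop, M A /\ exec p M t (Rn t) s'.

Definition immediate {Tr} (p : params) (Rn : R -> State Tr) (A : agent) : Prop :=
  forall t, 0 <= t -> enabled p A t (Rn t) -> fires p Rn A t.

Definition bounded {Tr} (p : params) (Rn : R -> State Tr) (A : agent) : Prop :=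
  immediate p Rn A \/
  exists b, 0 < b /\
    forall t, 0 <= t ->
      ~ (forall u, t < u < t + b -> enabled p A u (Rn u) /\ ~ fires p Rn A u).

Definition initial_state {Tr} (s : State Tr) : Prop :=
  forall x, TrackStatus s x = empty /\ Deadline s x = None.

(** index n belongs to the sequence of significant moments (None = infinite,
    Some k = last index is k) *)
Definition in_seq (len : option nat) (n : nat) : Prop :=
  match len with None => True | Some k => (n <= k)%nat end.

Definition train_motion {Tr} (p : params) (Rn : R -> State Tr) (x : Tr) : Prop :=
  exists (tm : nat -> R) (len : option nat),
    tm 0%nat = 0 /\
    (forall i, in_seq len (S i) -> tm i < tm (S i)) /\
    (forall i, in_seq len (3 * i + 1) ->
       forall t, tm (3 * i)%nat <= t < tm (3 * i + 1)%nat ->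
         TrackStatus (Rn t) x = empty) /\
    (forall i, in_seq len (3 * i + 2) ->
       (forall t, tm (3 * i + 1)%nat <= t < tm (3 * i + 2)%nat ->
          TrackStatus (Rn t) x = coming) /\
       d_min p <= tm (3 * i + 2)%nat - tm (3 * i + 1)%nat <= d_max p) /\
    (forall i, in_seq len (3 * i + 3) ->
       forall t, tm (3 * i + 2)%nat <= t < tm (3 * i + 3)%nat ->
         TrackStatus (Rn t) x = incrossing) /\
    (forall k, len = Some k ->
       (exists j, k = (3 * j)%nat) /\
       forall t, tm k <= t -> TrackStatus (Rn t) x = empty).

Definition regular_run {Tr} (p : params) (Rn : R -> State Tr) : Prop :=
  is_run p Rn /\ initial_state (Rn 0) /\
  (forall x, train_motion p Rn x) /\
  immediate p Rn Controller /\
  bounded p Rn Gate /\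
  (forall t, 0 <= t ->
     ~ (forall u, t < u < t + d_close p -> Dir (Rn u) = close /\ GateStatus (Rn u) = opened)) /\
  (forall t, 0 <= t ->
     ~ (forall u, t < u < t + d_open p -> Dir (Rn u) = open /\ GateStatus (Rn u) = closed)).

Definition Dir_left {Tr} (Rn : R -> State Tr) (t : R) (d : dir) : Prop :=
  exists eps, 0 < eps /\ forall u, t - eps < u < t -> Dir (Rn u) = d.
Definition Dir_right {Tr} (Rn : R -> State Tr) (t : R) (d : dir) : Prop :=
  exists eps, 0 < eps /\ forall u, t < u < t + eps -> Dir (Rn u) = d.

Definition Dir_set_to {Tr} (Rn : R -> State Tr) (t : R) (a : dir) : Prop :=
  (0 < t /\ exists d, Dir_left Rn t d /\ d <> a /\ Dir (Rn t) = a) \/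
  (Dir (Rn t) <> a /\ Dir_right Rn t a).

(* Main.v *)
Require Import Defs.
From Stdlib Require Import Reals Lra Lia Classical.
Open Scope R_scope.

Definition good {Tr} (p : params) (alpha : R) (s : State Tr) : Prop :=
  Dir s = open /\ forall x, Deadline s x = None \/
     exists d, Deadline s x = Some d /\ alpha + d_open p <= d.

Lemma updates_Dir {Tr} p A t (s : State Tr) d :
  updates p A t s (LDir, VDir d) -> A = Controller /\
  ((d = close /\ exists x, Deadline s x = Some t) \/
   (d = open /\ Dir s = close /\ SafeToOpen p t s)).
Proof.
  destruct A; simpl.
  - unfold gate_updates; intros [[_ H]|[_ H]]; discriminate.
  - unfold ctrl_updates; intros [[x [_ [_ H]]]|[[x [H1 H]]|[[x [_ [_ H]]]|[H1 [H2 H]]]]];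
      try discriminate; split; auto.
    + inversion H; subst; left; eauto.
    + inversion H; subst; right; auto.
Qed.

Lemma updates_Dl {Tr} p A t (s : State Tr) x v :
  updates p A t s (LDeadline x, VExt v) -> A = Controller /\
  (v = Some (t + W p) \/ v = None).
Proof.
  destruct A; simpl.
  - unfold gate_updates; intros [[_ H]|[_ H]]; discriminate.
  - unfold ctrl_updates; intros [[y [_ [_ H]]]|[[y [H1 H]]|[[y [_ [_ H]]]|[H1 [H2 H]]]]];
      try discriminate; split; auto; inversion H; auto.
Qed.

Lemma exec_Dir {Tr} p M t (s s' : State Tr) :
  exec p M t s s' -> Dir s' = Dir s \/
  exists A, M A /\ consistent (updates p A t s) /\ updates p A t s (LDir, VDir (Dir s')).
Proof.
  intros [_ H]. destruct (H LDir) as [[v [[A [HM [Hc Hu]]] Hv]] | [_ Hv]]; simpl in Hv.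
  - right. exists A. subst v. auto.
  - left. inversion Hv. auto.
Qed.

Lemma exec_Dl {Tr} p M t (s s' : State Tr) x :
  exec p M t s s' ->
  (Deadline s' x = Deadline s x /\
    forall v A, M A -> consistent (updates p A t s) -> ~ updates p A t s (LDeadline x, v)) \/
  exists A, M A /\ consistent (updates p A t s) /\ updates p A t s (LDeadline x, VExt (Deadline s' x)).
Proof.
  intros [_ H]. destruct (H (LDeadline x)) as [[v [[A [HM [Hc Hu]]] Hv]] | [Hn Hv]]; simpl in Hv.
  - right. exists A. subst v. auto.
  - left. inversion Hv. split; auto. intros v A HM Hc Hu. apply (Hn v). exists A; auto.
Qed.

Arguments exec_Dir {Tr p M t s s'}.
Arguments exec_Dl {Tr p M t s s'} x.
Arguments updates_Dir {Tr p A t s d}.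
Arguments updates_Dl {Tr p A t s x v}.

Lemma step_good {Tr} p alpha M t (s s' : State Tr) :
  d_open p <= W p -> alpha < t < alpha + d_open p -> good p alpha s ->
  exec p M t s s' -> good p alpha s'.
Proof.
  intros HW Ht [HD Hdl] Hex. split.
  - destruct (exec_Dir Hex) as [E|[A [_ [_ Hu]]]]; [congruence|].
    apply updates_Dir in Hu as [_ [[_ [x Hx]]|[E _]]]; auto.
    destruct (Hdl x) as [E|[d [E Hd]]]; rewrite Hx in E; [discriminate|].
    inversion E; subst; lra.
  - intros x. destruct (exec_Dl x Hex) as [[E _]|[A [_ [_ Hu]]]].
    + rewrite E; auto.
    + apply updates_Dl in Hu as [_ [E|E]]; rewrite E; auto.
      right. eexists; split; [reflexivity|lra].
Qed.

Lemma alpha_good {Tr} p alpha M (s s' : State Tr) :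
  d_open p <= W p -> Dir s = close -> Dir s' = open -> exec p M alpha s s' ->
  good p alpha s'.
Proof.
  intros HW Hc Ho Hex.
  destruct (exec_Dir Hex) as [E|[A [HM [Hcons Hu]]]]; [congruence|].
  rewrite Ho in Hu. pose proof Hu as Hu'.
  apply updates_Dir in Hu as [HA [[E _]|[_ [_ Hsafe]]]]; [discriminate|]. subst A.
  split; auto. intros x.
  destruct (exec_Dl x Hex) as [[E Hno]|[A [_ [_ Hu]]]].
  - rewrite E. destruct (Hsafe x) as [Hemp|Hlt].
    + destruct (Deadline s x) as [d|] eqn:Ed; auto. exfalso.
      apply (Hno (VExt None) Controller HM Hcons). simpl. unfold ctrl_updates.
      right; right; left. exists x. rewrite Ed. repeat split; auto; discriminate.
    + destruct (Deadline s x) as [d|]; simpl in Hlt; auto.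
      right. exists d; split; auto; lra.
  - apply updates_Dl in Hu as [_ [E|E]]; rewrite E; auto.
    right. eexists; split; [reflexivity|lra].
Qed.

Lemma good_transfer {Tr} p alpha (s s' : State Tr) :
  Dir s = Dir s' -> Deadline s = Deadline s' -> good p alpha s -> good p alpha s'.
Proof. intros E1 E2 [H1 H2]. split; [congruence|]. rewrite <- E2. auto. Qed.

Arguments good_transfer {Tr p alpha s s'}.
Arguments step_good {Tr p alpha M t s s'}.
Arguments alpha_good {Tr p alpha M s s'}.

Lemma ts_mono (ts : nat -> R) n :
  (forall i, (i < n)%nat -> ts i < ts (S i)) -> forall j, (j <= n)%nat -> ts j <= ts n.
Proof.
  intros Hlt. assert (forall k j, (j + k <= n)%nat -> ts j <= ts (j + k)%nat).
  { induction k; intros j Hj. rewrite Nat.add_0_r; lra.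
    specialize (IHk j ltac:(lia)). specialize (Hlt (j + k)%nat ltac:(lia)).
    replace (j + S k)%nat with (S (j + k)) by lia. lra. }
  intros j Hj. pose proof (H (n - j)%nat j ltac:(lia)) as H1.
  replace (j + (n - j))%nat with n in H1 by lia. exact H1.
Qed.

Lemma main_good {Tr} {p : params} {Rn : R -> State Tr} {alpha : R} :
  is_run p Rn -> 0 <= alpha -> 0 < d_open p -> d_open p <= W p ->
  Dir (Rn alpha) = close -> Dir_right Rn alpha open ->
  forall u, alpha < u < alpha + d_open p -> good p alpha (Rn u).
Proof.
  intros [Hpre [Hi Hii]] Ha Hdo HW Hc [eps [Heps Hright]].
  destruct (Hpre (alpha + d_open p) ltac:(lra)) as [ts [n [H0 [Hn [Hlt Hconst]]]]].
  assert (Hm := ts_mono ts n Hlt).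
  assert (Hall : forall i, (i <= n)%nat -> forall u, alpha < u <= ts i -> u < alpha + d_open p ->
                 good p alpha (Rn u)).
  { induction i as [|i IH]; intros Hin u Hu Hut.
    - rewrite H0 in Hu. lra.
    - destruct (Rle_lt_dec u (ts i)) as [Hle|Hgt].
      + apply IH; [lia|lra|lra].
      + assert (Hli := Hlt i ltac:(lia)).
        assert (HSn := Hm (S i) Hin).
        set (s0 := Rn ((ts i + ts (S i)) / 2)).
        assert (Hs0 : forall v, ts i < v < ts (S i) -> Rn v = s0).
        { intros v Hv. unfold s0. apply (Hconst i ltac:(lia)); lra. }
        assert (Hfin : good p alpha s0 -> good p alpha (Rn u)).
        { intros G. destruct (Rlt_le_dec u (ts (S i))) as [Hu2|Hu2].
          - rewrite Hs0 by lra. exact G.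
          - assert (Eu : u = ts (S i)) by lra.
            destruct (classic (s0 = Rn u)) as [E|E]; [rewrite <- E; exact G|].
            assert (Hl : left_lim Rn u s0).
            { exists (ts (S i) - ts i). split; [lra|]. intros v Hv. apply Hs0; lra. }
            destruct (Hii u s0 ltac:(lra) Hl E) as [E1 [E2 _]].
            apply (good_transfer E2 E1 G). }
        apply Hfin.
        destruct (total_order_T (ts i) alpha) as [[Hlo|Heq]|Hhi].
        * exfalso. destruct (Rlt_le_dec alpha (ts (S i))) as [Ha2|Ha2]; [|lra].
          set (v := alpha + Rmin eps (ts (S i) - alpha) / 2).
          assert (Hv1 : alpha < v < alpha + eps).
          { unfold v. pose proof (Rmin_l eps (ts (S i) - alpha)).
            pose proof (Rmin_pos eps (ts (S i) - alpha) Heps ltac:(lra)). lra. }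
          assert (Hv2 : v < ts (S i)).
          { unfold v. pose proof (Rmin_r eps (ts (S i) - alpha)).
            pose proof (Rmin_pos eps (ts (S i) - alpha) Heps ltac:(lra)). lra. }
          pose proof (Hright v Hv1) as Dv.
          rewrite (Hs0 v ltac:(lra)) in Dv. rewrite (Hs0 alpha ltac:(lra)) in Hc.
          congruence.
        * set (v := alpha + Rmin eps (ts (S i) - alpha) / 2).
          assert (Hv1 : alpha < v < alpha + eps).
          { unfold v. pose proof (Rmin_l eps (ts (S i) - alpha)).
            pose proof (Rmin_pos eps (ts (S i) - alpha) Heps ltac:(lra)). lra. }
          assert (Hv2 : v < ts (S i)).
          { unfold v. pose proof (Rmin_r eps (ts (S i) - alpha)).
            pose proof (Rmin_pos eps (ts (S i) - alpha) Heps ltac:(lra)). lra. }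
          assert (Do : Dir s0 = open).
          { rewrite <- (Hs0 v ltac:(lra)). apply Hright; lra. }
          assert (Hr : right_lim Rn alpha s0).
          { exists (ts (S i) - ts i). split; [lra|]. intros w Hw. apply Hs0; lra. }
          assert (Hne : s0 <> Rn alpha) by (intro E; rewrite <- E in Hc; congruence).
          destruct (Hi alpha s0 Ha Hr Hne) as [M HM].
          exact (alpha_good HW Hc Do HM).
        * assert (G : good p alpha (Rn (ts i))) by (apply IH; [lia|lra|lra]).
          destruct (classic (s0 = Rn (ts i))) as [E|E]; [rewrite E; exact G|].
          assert (Hr : right_lim Rn (ts i) s0).
          { exists (ts (S i) - ts i). split; [lra|]. intros w Hw. apply Hs0; lra. }
          destruct (Hi (ts i) s0 ltac:(lra) Hr E) as [M HM].
          assert (Ht : alpha < ts i < alpha + d_open p) by (split; [exact Hhi|]; rewrite <- Hn; lra).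
          exact (step_good HW Ht G HM). }
  intros u Hu. apply (Hall n (le_n n)); rewrite ?Hn; lra.
Qed.

Theorem mainTheorem13 (Tr : Type) (p : params) (Rn : R -> State Tr) (alpha : R) :
  FiniteType Tr ->
  valid_params p ->
  d_close p + d_open p <= d_min p ->
  regular_run p Rn ->
  0 <= alpha ->
  Dir_set_to Rn alpha open ->
  forall t, alpha < t < alpha + d_open p -> Dir (Rn t) = open.
Proof.
  intros _ Hv Hd [Hrun _] Ha Hset t Ht.
  assert (Hdo : 0 < d_open p) by (destruct Hv as [_ [H _]]; exact H).
  assert (HW : d_open p <= W p) by (unfold W; lra).
  destruct Hset as [[Hpos [d [[eps [Heps Hleft]] [Hne Hao]]]] | [Hne Hright]].
  - exfalso. destruct Hrun as [Hpre [_ Hii]].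
    destruct (Hpre alpha Hpos) as [ts [n [H0 [Hn [Hlt Hconst]]]]].
    destruct n as [|m]; [rewrite H0 in Hn; lra|].
    assert (Hli := Hlt m (Nat.lt_succ_diag_r m)).
    set (s0 := Rn ((ts m + ts (S m)) / 2)).
    assert (Hs0 : forall v, ts m < v < ts (S m) -> Rn v = s0).
    { intros v Hv'. unfold s0. apply (Hconst m (Nat.lt_succ_diag_r m)); lra. }
    set (v := alpha - Rmin eps (alpha - ts m) / 2).
    assert (Hmp := Rmin_pos eps (alpha - ts m) Heps ltac:(lra)).
    assert (Hm1 := Rmin_l eps (alpha - ts m)).
    assert (Hm2 := Rmin_r eps (alpha - ts m)).
    assert (Dv : Dir s0 = d).
    { rewrite <- (Hs0 v) by (unfold v; lra). apply Hleft. unfold v; lra. }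
    assert (Hl : left_lim Rn alpha s0).
    { exists (alpha - ts m). split; [lra|]. intros w Hw. apply Hs0; lra. }
    destruct (classic (s0 = Rn alpha)) as [E|E].
    + rewrite <- E in Hao. congruence.
    + destruct (Hii alpha s0 Hpos Hl E) as [_ [E2 _]]. congruence.
  - assert (Hc : Dir (Rn alpha) = close) by (destruct (Dir (Rn alpha)); congruence).
    exact (proj1 (main_good (p:=p) (Rn:=Rn) (alpha:=alpha) Hrun Ha Hdo HW Hc Hright t Ht)).
Qed.
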